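(* Let $(X,d)$ be a compact doubling metric space with $\operatorname{diam}(X,d)=1/2$ and $\mathcal S$ a hyperbolic filling with parameters $a\ge\lambda\ge6$. Let $\rho:\mathcal S\to(0,\infty)$ satisfy (H1) and (H4) (exponent $p$). Let $C>1$, let $\mu_k$ be a $(C,\pi)$-balanced probability mass function on $\mathcal S_k$, and let $f_0:\mathcal S_{k+1}\to(0,1]$ be a probability mass function such that $(\mu_k,f_0)$ is $(C,\pi)$-compatible. Let $e=\{w_1,w_1'\}$ be a horizontal edge between vertices of $\mathcal S_{k+1}$ on which $f_0$ is $(C,\pi)$-unbalanced. Then $(\mu_k,B^e_{k+1}(f_0))$ is $(C,\pi)$-compatible.
   Context: Hyperbolic filling: $X_0\subset X_1\subset\cdots$ increasing, $X_n$ maximal $a^{-n}$-separated in $X$ ($X_0=\{x_0\}$); $\mathcal S_n=\{(x,n):x\in X_n\}$, $\mathcal S=\bigcup_n\mathcal S_n$, $v_0=(x_0,0)$. Each $(x,n)$, $n\ge1$, has a fixed parent $(y,n-1)$ with $d(x,y)=\min_{z\in X_{n-1}}d(x,z)$; $\mathcal D_n(v)$ = descendants of $v$ in $\mathcal S_n$; genealogy $g(v)=(v_0,\dots,v_k=v)$. $D_2$: graph distance for the graph with edges vertex–parent and horizontal edges between distinct $(x,n),(y,n)$ with $B(x,\lambda a^{-n})\cap B(y,\lambda a^{-n})\ne\emptyset$. $\pi(v)=\prod_{w\in g(v)}\rho(w)$. (H1) $0<\eta_-\le\rho\le\eta_+<1$. (H4) $\sum_{w\in\mathcal D_n(v)}\pi(w)^p\le\pi(v)^p$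 for all $v\in\mathcal S_m$, $n>m$. $f:\mathcal S_k\to(0,\infty)$ is $(C,\pi)$-balanced if $f(u)/\pi(u)^p\le C^2f(v)/\pi(v)^p$ for all $u,v\in\mathcal S_k$ with $D_2(u,v)=1$; it is $(C,\pi)$-balanced on an edge $\{u,v\}$ if $C^{-2}f(v)/\pi(v)^p\le f(u)/\pi(u)^p\le C^2f(v)/\pi(v)^p$, and $(C,\pi)$-unbalanced on it otherwise. $(f_0,f_1)$ with $f_0$ on $\mathcal S_k$, $f_1$ on $\mathcal S_{k+1}$ is $(C,\pi)$-compatible if $f_0(u)/\pi(u)^p\le f_1(v)/\pi(v)^p\le Cf_0(u)/\pi(u)^p$ whenever $u$ is the parent of $v$. Balancing operator: for a horizontal edge $e=\{u,v\}$ in $\mathcal S_j$ and $f:\mathcal S_j\to(0,\infty)$, $B^e_j(f)=f$ if $f$ is balanced on $e$; if $f(u)/\pi(u)^p>C^2f(v)/\pi(v)^p$, then $B^e_j(f)$ agrees with $f$ off $\{u,v\}$ and equals $f(u)-\alpha$ at $u$, $f(v)+\alpha$ at $v$, where $\alpha(C^2/\pi(v)^p+1/\pi(u)^p)=f(u)/\pi(u)^p-C^2f(v)/\pi(v)^p$; symmetrically with $u,v$ exchanged if $f(v)/\pi(v)^p>C^2f(u)/\pi(u)^p$. *)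

(* Defs.v *)
From HB Require Import structures.
From mathcomp Require Import all_boot all_order all_algebra.
From mathcomp Require Import finmap.
From mathcomp Require Import all_classical all_reals all_analysis.
Set Implicit Arguments. Unset Strict Implicit. Unset Printing Implicit Defensive.
Import Order.TTheory GRing.Theory Num.Theory.
Local Open Scope ring_scope.


Section Defs.
Variables (R : realType) (X : choiceType).

Definition is_metric (d : X -> X -> R) : Prop :=
  [/\ forall x y, 0 <= d x y,
      forall x y, d x y = 0 <-> x = y,
      forall x y, d x y = d y x &
      forall x y z, d x z <= d x y + d y z].

Definition ballm (d : X -> X -> R) (x : X) (r : R) : X -> Prop :=
  fun y => d x y < r.

(** compactness (sequential compactness, equivalent for metric spaces) *)
Definition seq_compact (d : X -> X -> R) : Prop :=
  forall u : nat -> X, exists (phi : nat -> nat) (l : X),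
    (forall n, (phi n < phi n.+1)%N) /\
    (forall e : R, 0 < e -> exists N : nat, forall n, (N <= n)%N -> d (u (phi n)) l < e).

Definition doubling (d : X -> X -> R) : Prop :=
  exists N : nat, forall (x : X) (r : R), 0 < r ->
    exists s : seq X, (size s <= N)%N /\
      forall y, ballm d x (2 * r) y -> exists2 z, z \in s & ballm d z r y.

Definition diam_eq (d : X -> X -> R) (D : R) : Prop :=
  (forall x y, d x y <= D) /\
  (forall e : R, 0 < e -> exists x y, D - e < d x y).

Definition ainv (a : R) (n : nat) : R := (a ^+ n)^-1.

(** Hyperbolic filling data: X_n (finite vertex sets) and the parent map
    par n x = point of the parent of (x,n), n >= 1. *)
Definition hyperbolic_filling (d : X -> X -> R) (a : R) (x0 : X)
    (Xn : nat -> {fset X}) (par : nat -> X -> X) : Prop :=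
  [/\ Xn 0%N = [fset x0]%fset,
      forall n, (Xn n `<=` Xn n.+1)%fset,
      forall n x y, x \in Xn n -> y \in Xn n -> x != y -> ainv a n <= d x y,
      (* maximality: no point of X can be added keeping separation *)
      forall n z, z \notin Xn n -> exists2 x, x \in Xn n & d z x < ainv a n &
      forall n x, x \in Xn n.+1 ->
        par n.+1 x \in Xn n /\ forall z, z \in Xn n -> d x (par n.+1 x) <= d x z].

Definition hedge (d : X -> X -> R) (lam a : R) (n : nat) (x y : X) : Prop :=
  x != y /\ exists z, ballm d x (lam * ainv a n) z /\ ballm d y (lam * ainv a n) z.

(** adjacency in the graph defining D_2 (vertices (x,n),(y,m) in S);
    D_2(u,v) = 1 iff u and v are adjacent *)
Definition adjS (d : X -> X -> R) (lam a : R) (par : nat -> X -> X)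
    (x : X) (n : nat) (y : X) (m : nat) : Prop :=
  (n = m /\ hedge d lam a n x y) \/
  (n = m.+1 /\ par n x = y) \/ (m = n.+1 /\ par m y = x).

Fixpoint up (par : nat -> X -> X) (n k : nat) (x : X) : X :=
  match k with
  | 0%N => x
  | k'.+1 => up par n.-1 k' (par n x)
  end.

Fixpoint piS (rho : X -> nat -> R) (par : nat -> X -> X) (n : nat) (x : X) : R :=
  match n with
  | 0%N => rho x 0%N
  | n'.+1 => rho x n * piS rho par n' (par n x)
  end.

Definition H1 (Xn : nat -> {fset X}) (rho : X -> nat -> R) (etam etap : R) : Prop :=
  [/\ 0 < etam, etam <= etap, etap < 1 &
      forall n x, x \in Xn n -> etam <= rho x n <= etap].

(** (H4): sum over the descendants D_n(v) of v=(y,m) *)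
Definition H4 (Xn : nat -> {fset X}) (rho : X -> nat -> R) (par : nat -> X -> X)
    (p : R) : Prop :=
  forall (m n : nat) (y : X), y \in Xn m -> (m < n)%N ->
    \sum_(x <- enum_fset (Xn n) | up par n (n - m) x == y)
        (piS rho par n x) `^ p
      <= (piS rho par m y) `^ p.

Definition prob_mass (Xn : nat -> {fset X}) (k : nat) (f : X -> R) : Prop :=
  (forall x, x \in Xn k -> 0 < f x) /\ \sum_(x <- enum_fset (Xn k)) f x = 1.

Definition dens (rho : X -> nat -> R) (par : nat -> X -> X) (p : R) (k : nat)
    (f : X -> R) (x : X) : R := f x / (piS rho par k x) `^ p.

Definition balanced (d : X -> X -> R) (lam a : R) (Xn : nat -> {fset X})
    (rho : X -> nat -> R) (par : nat -> X -> X) (p C : R) (k : nat) (f : X -> R) : Prop :=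
  (forall x, x \in Xn k -> 0 < f x) /\
  forall u v, u \in Xn k -> v \in Xn k -> adjS d lam a par u k v k ->
    dens rho par p k f u <= C ^+ 2 * dens rho par p k f v.

Definition balanced_edge (rho : X -> nat -> R) (par : nat -> X -> X) (p C : R) (k : nat)
    (f : X -> R) (u v : X) : Prop :=
  C ^- 2 * dens rho par p k f v <= dens rho par p k f u
  /\ dens rho par p k f u <= C ^+ 2 * dens rho par p k f v.

Definition compatible (Xn : nat -> {fset X}) (rho : X -> nat -> R) (par : nat -> X -> X)
    (p C : R) (k : nat) (f0 f1 : X -> R) : Prop :=
  forall u v, u \in Xn k -> v \in Xn k.+1 -> par k.+1 v = u ->
    dens rho par p k f0 u <= dens rho par p k.+1 f1 v
    /\ dens rho par p k.+1 f1 v <= C * dens rho par p k f0 u.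

Definition balancing (rho : X -> nat -> R) (par : nat -> X -> X) (p C : R) (j : nat)
    (f : X -> R) (u v : X) : X -> R :=
  let pu := (piS rho par j u) `^ p in
  let pv := (piS rho par j v) `^ p in
  if f u / pu > C ^+ 2 * (f v / pv) then
    let alpha := (f u / pu - C ^+ 2 * (f v / pv)) / (C ^+ 2 / pv + 1 / pu) in
    fun x => if x == u then f u - alpha else if x == v then f v + alpha else f x
  else if f v / pv > C ^+ 2 * (f u / pu) then
    let alpha := (f v / pv - C ^+ 2 * (f u / pu)) / (C ^+ 2 / pu + 1 / pv) in
    fun x => if x == v then f v - alpha else if x == u then f u + alpha else f x
  else f.

End Defs.

(* Main.v *)
Require Import Defs.
From HB Require Import structures.
From mathcomp Require Import all_boot all_order all_algebra.
From mathcomp Require Import finmap.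
From mathcomp Require Import all_classical all_reals all_analysis.
From mathcomp Require Import ring lra.
Import Order.TTheory GRing.Theory Num.Theory.
Local Open Scope ring_scope.

Lemma alg_core (R : realFieldType) (A B P Q c : R) :
  0 < P -> 0 < Q -> 1 <= c -> c * (B / Q) < A / P ->
  let al := (A / P - c * (B / Q)) / (c / Q + 1 / P) in
  [/\ 0 < al, (A - al) / P = c * ((B + al) / Q),
      (A - al) / P <= A / P & B / Q <= (B + al) / Q].
Proof.
move=> P0 Q0 c1 H al.
have D0 : 0 < c / Q + 1 / P.
  apply: addr_gt0; apply: divr_gt0 => //; lra.
have al0 : 0 < al by apply: divr_gt0 => //; lra.
split => //.
- rewrite /al; field.
  have cP : 0 < c * P + Q by apply: addr_gt0 => //; apply: mulr_gt0 => //; lra.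
  by rewrite !gt_eqF.
- rewrite mulrBl lerBlDr lerDl; apply/ltW/divr_gt0 => //.
- rewrite mulrDl lerDl; apply/ltW/divr_gt0 => //.
Qed.

Lemma piS_pos (R : realType) (X : choiceType) (Xn : nat -> {fset X})
  (par : nat -> X -> X) (rho : X -> nat -> R) :
  (forall n x, x \in Xn n.+1 -> par n.+1 x \in Xn n) ->
  (forall n x, x \in Xn n -> 0 < rho x n) ->
  forall n x, x \in Xn n -> 0 < piS rho par n x.
Proof.
move=> Hp Hr; elim=> [|n IH] x Hx /=; first exact: Hr.
apply: mulr_gt0; [exact: Hr | exact: IH _ (Hp _ _ Hx)].
Qed.

Lemma ainv_gt0 (R : realType) (a : R) n : 0 < a -> 0 < ainv a n.
Proof. by move=> a0; rewrite /ainv invr_gt0 exprn_gt0. Qed.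

Lemma ainvS (R : realType) (a : R) n : 0 < a -> a * ainv a n.+1 = ainv a n.
Proof.
move=> a0; have an : a ^+ n != 0 by rewrite expf_neq0 // gt_eqF.
have an0 : a != 0 by rewrite gt_eqF.
by rewrite /ainv exprS invfM mulrA divff ?mul1r.
Qed.

Lemma par_close (R : realType) (X : choiceType) (d : X -> X -> R) (a : R) (x0 : X)
  (Xn : nat -> {fset X}) (par : nat -> X -> X) k u :
  is_metric d -> hyperbolic_filling d a x0 Xn par -> 0 < a ->
  u \in Xn k.+1 -> d u (par k.+1 u) < ainv a k.
Proof.
move=> [Hd0 Hdeq Hds Hdt] [_ _ _ Hmax Hpar] a0 Hu.
have [_ Hmin] := Hpar k u Hu.
case: (boolP (u \in Xn k)) => Huk.
  apply: (le_lt_trans (Hmin u Huk)).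
  have -> : d u u = 0 by apply/Hdeq.
  exact: ainv_gt0.
have [x Hx Hux] := Hmax k u Huk.
exact: le_lt_trans (Hmin x Hx) Hux.
Qed.

Lemma geo (R : realType) (X : choiceType) (d : X -> X -> R) (a lam : R) (x0 : X)
  (Xn : nat -> {fset X}) (par : nat -> X -> X) (rho : X -> nat -> R) (p C : R) k
  (mu : X -> R) u v :
  is_metric d -> hyperbolic_filling d a x0 Xn par -> 6 <= lam -> lam <= a ->
  1 < C -> balanced d lam a Xn rho par p C k mu ->
  u \in Xn k.+1 -> v \in Xn k.+1 -> hedge d lam a k.+1 u v ->
  dens rho par p k mu (par k.+1 u) <= C ^+ 2 * dens rho par p k mu (par k.+1 v).
Proof.
move=> Hm hf Hl6 Hla HC [Hpos Hbal] Hu Hv [Huv [z [Huz Hvz]]].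
have a0 : 0 < a by lra.
have Hpu : par k.+1 u \in Xn k by case: hf => _ _ _ _ H; case: (H k u Hu).
have Hpv : par k.+1 v \in Xn k by case: hf => _ _ _ _ H; case: (H k v Hv).
case: (eqVneq (par k.+1 u) (par k.+1 v)) => [-> | Hne].
  have H0 : 0 <= dens rho par p k mu (par k.+1 v).
    by rewrite /dens divr_ge0 ?powR_ge0 // ltW // Hpos.
  have C2 : 1 <= C ^+ 2 by rewrite expr2; nra.
  nra.
apply: Hbal => //; left; split => //; split => //.
have [Hd0 Hdeq Hds Hdt] := Hm.
have cu := @par_close _ _ d a x0 Xn par k u Hm hf a0 Hu.
have cv := @par_close _ _ d a x0 Xn par k v Hm hf a0 Hv.
have t0 := @ainv_gt0 _ a k a0.
have s0 := @ainv_gt0 _ a k.+1 a0.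
have ht := @ainvS _ a k a0.
set t := ainv a k in cu cv t0 ht *.
set s := ainv a k.+1 in s0 ht Huz Hvz *.
have h1 : lam * s <= t by rewrite -ht ler_wpM2r // ltW.
have h2 : 3 * t <= lam * t by rewrite ler_wpM2r // ?ltW //; lra.
exists u; rewrite /ballm; split.
  rewrite Hds; apply: (lt_le_trans cu); lra.
have e1 := Hdt (par k.+1 v) v u.
have e2 := Hdt v z u.
rewrite /ballm in Huz Hvz.
have e3 : d z u = d u z by rewrite Hds.
rewrite (Hds (par k.+1 v) v) in e1.
lra.
Qed.

Lemma core (R : realType) (X : choiceType) (Xn : nat -> {fset X})
  (par : nat -> X -> X) (rho : X -> nat -> R) (p C : R) k (mu f : X -> R) u v al :
  1 < C -> u != v -> u \in Xn k.+1 -> v \in Xn k.+1 ->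
  par k.+1 u \in Xn k -> par k.+1 v \in Xn k ->
  dens rho par p k mu (par k.+1 u) <= C ^+ 2 * dens rho par p k mu (par k.+1 v) ->
  compatible Xn rho par p C k mu f ->
  (f u - al) / piS rho par k.+1 u `^ p = C ^+ 2 * ((f v + al) / piS rho par k.+1 v `^ p) ->
  (f u - al) / piS rho par k.+1 u `^ p <= f u / piS rho par k.+1 u `^ p ->
  f v / piS rho par k.+1 v `^ p <= (f v + al) / piS rho par k.+1 v `^ p ->
  compatible Xn rho par p C k mu
    (fun x => if x == u then f u - al else if x == v then f v + al else f x).
Proof.
move=> HC Huv Hu Hv Hpu Hpv Hgeo Hcomp Heq Hle1 Hle2 y x Hy Hx Hxy.
have [cu1 cu2] := Hcomp _ u Hpu Hu erefl.
have [cv1 cv2] := Hcomp _ v Hpv Hv erefl.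
rewrite /dens in Hgeo cu1 cu2 cv1 cv2 *.
have C2 : 0 < C ^+ 2 by rewrite exprn_gt0 //; lra.
case: (eqVneq x u) => [Exu | Nxu].
  move: Exu Hxy => -> <-; cbv beta;  split.
    rewrite Heq; apply: (le_trans Hgeo); rewrite ler_pM2l //.
    exact: le_trans cv1 Hle2.
  exact: le_trans Hle1 cu2.
case: (eqVneq x v) => [Exv | Nxv].
  move: Exv Hxy => -> <-; cbv beta; have Hvu : (v == u) = false by rewrite eq_sym (negbTE Huv).
  split; first exact: le_trans cv1 Hle2.
  rewrite -(ler_pM2l C2) -Heq.
  apply: (le_trans Hle1); apply: (le_trans cu2).
  rewrite [X in _ <= X]mulrCA ler_pM2l //; lra.
exact: Hcomp.
Qed.

Theorem lemma3p12 (R : realType) (X : choiceType) (d : X -> X -> R)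
  (a lam : R) (x0 : X) (Xn : nat -> {fset X}) (par : nat -> X -> X)
  (rho : X -> nat -> R) (etam etap p C : R) (k : nat)
  (mu f0 : X -> R) (w1 w1' : X) :
  is_metric d -> seq_compact d -> doubling d -> diam_eq d (1 / 2) ->
  6 <= lam -> lam <= a ->
  hyperbolic_filling d a x0 Xn par ->
  (forall n x, x \in Xn n -> 0 < rho x n) ->
  H1 Xn rho etam etap -> H4 Xn rho par p ->
  1 < C ->
  prob_mass Xn k mu -> balanced d lam a Xn rho par p C k mu ->
  prob_mass Xn k.+1 f0 -> (forall x, x \in Xn k.+1 -> f0 x <= 1) ->
  compatible Xn rho par p C k mu f0 ->
  w1 \in Xn k.+1 -> w1' \in Xn k.+1 -> hedge d lam a k.+1 w1 w1' ->
  ~ balanced_edge rho par p C k.+1 f0 w1 w1' ->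
  compatible Xn rho par p C k mu (balancing rho par p C k.+1 f0 w1 w1').
Proof.
move=> Hm _ _ _ Hl6 Hla hf Hrho _ _ HC _ Hbal _ _ Hcomp Hw1 Hw1' Hedge _.
have Hp : forall n x, x \in Xn n.+1 -> par n.+1 x \in Xn n.
  by case: hf => _ _ _ _ H n x Hx; case: (H n x Hx).
have Pu : 0 < piS rho par k.+1 w1 `^ p by apply: powR_gt0; exact: (@piS_pos _ _ Xn par rho Hp Hrho _ _ Hw1).
have Pv : 0 < piS rho par k.+1 w1' `^ p by apply: powR_gt0; exact: (@piS_pos _ _ Xn par rho Hp Hrho _ _ Hw1').
have Hedge' : hedge d lam a k.+1 w1' w1.
  case: Hedge => Hne [z [h1 h2]]; split; first by rewrite eq_sym.
  by exists z.
have c1 : 1 <= C ^+ 2 by rewrite expr2; nra.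
have Hne : w1 != w1' by case: Hedge.
rewrite /balancing; case: ifP => H1.
  have [h1 h2 h3 h4] := @alg_core _ (f0 w1) (f0 w1') _ _ _ Pu Pv c1 H1.
  apply: (@core _ _ Xn par rho p C k mu f0 w1 w1') => //; try exact: Hp.
  exact: (@geo _ _ d a lam x0 Xn par rho p C k mu w1 w1' Hm hf Hl6 Hla HC Hbal Hw1 Hw1' Hedge).
case: ifP => H2; last exact: Hcomp.
have [h1 h2 h3 h4] := @alg_core _ (f0 w1') (f0 w1) _ _ _ Pv Pu c1 H2.
apply: (@core _ _ Xn par rho p C k mu f0 w1' w1) => //; try exact: Hp.
- by rewrite eq_sym.
- exact: (@geo _ _ d a lam x0 Xn par rho p C k mu w1' w1 Hm hf Hl6 Hla HC Hbal Hw1' Hw1 Hedge').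
Qed.
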